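(* Let $n$ be an even integer, let $s$ be a positive integer with $s < n/2$, put $k = s$, and let $x$ be an integer with $2s \leq x \leq n-s-1$. Let $d$ be the sequence of length $n$ $$d = (\underbrace{n-1, \ldots, n-1}_{s},\, \underbrace{x, \ldots, x}_{n-2s},\, \underbrace{s, \ldots, s}_{s}).$$ Then $d$ is a $k$-factorable graphic sequence, and no realization of $d$ has a connected $k$-factor.
   Context: A finite sequence of nonnegative integers $d = (d_1, \ldots, d_n)$ is graphic if there is a simple graph on vertices $v_1, \ldots, v_n$ with $\deg(v_i) = d_i$ for all $i$; such a graph is a realization of $d$. A $k$-factor of a graph $G$ is a spanning subgraph of $G$ in which every vertex has degree $k$. A graphic sequence $d$ is $k$-factorable if some realization of $d$ contains a $k$-factor. A connected $k$-factor is a $k$-factor that is a connected graph. *)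

(* Defs.v *)
From mathcomp Require Import all_boot all_order.
Set Implicit Arguments. Unset Strict Implicit. Unset Printing Implicit Defensive.

Definition simple_graph (T : finType) (e : rel T) : Prop :=
  symmetric e /\ irreflexive e.

Definition deg (T : finType) (e : rel T) (v : T) : nat := #|[set w | e v w]|.

Definition realization (d : seq nat) (e : rel 'I_(size d)) : Prop :=
  simple_graph e /\ forall i : 'I_(size d), deg e i = nth 0 d i.

Arguments realization : clear implicits.

Definition graphic (d : seq nat) : Prop := exists e : rel 'I_(size d), realization d e.

Definition k_factor (T : finType) (k : nat) (G F : rel T) : Prop :=
  @simple_graph T F /\ subrel F G /\ forall v, deg F v = k.

Definition connected_graph (T : finType) (F : rel T) : Prop :=
  forall u v : T, connect F u v.

Definition k_factorable (k : nat) (d : seq nat) : Prop :=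
  exists e : rel 'I_(size d), realization d e /\ exists F, k_factor k e F.

Definition seq_d (n s x : nat) : seq nat :=
  nseq s n.-1 ++ nseq (n - 2 * s) x ++ nseq s s.

(* Main.v *)
Require Import Defs.
From mathcomp Require Import all_boot all_order.
From mathcomp Require Import zify.

Definition Rr (m r i j : nat) : bool :=
  (i != j) && (if i == m.-1 then j < r else if j == m.-1 then i < r
               else ((i + j) * m./2) %% m.-1 < r).

Lemma Rr_sym m r i j : Rr m r i j = Rr m r j i.
Proof.
rewrite /Rr eq_sym addnC; case: (j =P i) => //= ji.
have [iE|im] := eqVneq i m.-1; have [jE|jm] := eqVneq j m.-1;
  rewrite ?iE ?jE ?eqxx ?(negbTE im) ?(negbTE jm) //.

Qed.

Lemma Rr_mono m r1 r2 i j : r1 <= r2 -> Rr m r1 i j -> Rr m r2 i j.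
Proof.
rewrite /Rr => le /andP[-> H] /=.
by move: H; case: ifP => _; [|case: ifP => _] => H; apply: leq_trans H le.
Qed.

Lemma Rr_neq m r i j : Rr m r i j -> i != j.
Proof. by case/andP. Qed.

Lemma count_iotaS P N : count P (iota 0 N.+1) = count P (iota 0 N) + P N.
Proof. by rewrite -addn1 iotaD count_cat /= addn0 add0n. Qed.

Lemma count_lt r N : r <= N -> count (fun j => j < r) (iota 0 N) = r.
Proof.
suff: count (fun j => j < r) (iota 0 N) = minn r N by move=> -> le; lia.
elim: N => [|N IH]; first by rewrite minn0.
rewrite count_iotaS IH; case: (ltnP N r) => /= H; lia.
Qed.

Lemma count_neq P (s : seq nat) i : uniq s -> i \in s ->
  count (fun j => (i != j) && P j) s + P i = count P s.
Proof.
move=> us ins.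
have -> : count (fun j => (i != j) && P j) s = count P (rem i s).
  by rewrite rem_filter // count_filter; apply: eq_count => j /=; rewrite andbC eq_sym.
rewrite count_rem ins /=.
have : P i -> 0 < count P s by move=> Pi; rewrite -has_count; apply/hasP; exists i.
case: (P i) => /=; last by rewrite subn0 addn0.
by move=> /(_ isT) H; rewrite subnK.
Qed.

Lemma inj_aux q h i j k : h.*2 = q.+1 -> j < q -> k < q ->
  ((i+j)*h) %% q = ((i+k)*h) %% q -> j = k.
Proof.
move=> hh jq kq E.
have E2 : ((i+j)*h*2) %% q = ((i+k)*h*2) %% q by rewrite -modnMml E modnMml.
rewrite -!mulnA muln2 hh !mulnS !(addnC (i + _)) !modnMDl in E2.
by move: E2 => /eqP; rewrite eqn_modDl !modn_small // => /eqP.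
Qed.

Lemma Rr_deg m r i : ~~ odd m -> 0 < m -> r <= m.-1 -> i < m ->
  count (Rr m r i) (iota 0 m) = r.
Proof.
move=> ev m0 rle im.
have h2 : m./2.*2 = m by rewrite even_halfK.
set q := m.-1.
have mq : m = q.+1 by rewrite /q; lia.
rewrite (_ : iota 0 m = iota 0 q.+1) ?count_iotaS; last by rewrite -mq.
case: (i =P q) => [iq|/eqP iq].
  rewrite {2}/Rr iq eqxx /= addn0.
  transitivity (count (fun j => j < r) (iota 0 q)); last exact: count_lt.
  apply: eq_in_count => j.
  rewrite mem_iota /Rr /q eqxx /= => jq; case: eqP => [?|//]; lia.
have iq' : i < q by lia.
have -> : Rr m r i q = (i < r) by rewrite /Rr iq /q eqxx /=; case: eqP => //; lia.
set f := fun j => ((i + j) * m./2) %% q.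
have -> : count (Rr m r i) (iota 0 q) = count (fun j => (i != j) && (f j < r)) (iota 0 q).
  apply: eq_in_count => j; rewrite mem_iota /Rr /= -/q (negbTE iq) => jq.
  by have -> : (j == q) = false by apply/eqP; lia.
have fi : f i = i.
  have e : (i + i) * m./2 = i * q + i.
    move: h2; rewrite -addnn mq; move: (m./2) => h hh; nia.
  by rewrite /f e modnMDl modn_small.
have Hc : count (fun j => f j < r) (iota 0 q) = r.
  transitivity (count (fun j => j < r) (iota 0 q)); last exact: count_lt.
  apply/esym.
  have Hp : perm_eq [seq f j | j <- iota 0 q] (iota 0 q).
    have um : uniq [seq f j | j <- iota 0 q].
      rewrite map_inj_in_uniq ?iota_uniq // => j k; rewrite !mem_iota /f => jq kq E.
      apply: (@inj_aux q m./2 i) E => //; rewrite h2 -mq //.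
    apply: uniq_perm => //; first exact: iota_uniq.
    have Hsub : {subset [seq f j | j <- iota 0 q] <= iota 0 q}.
      move=> y /mapP [j _ ->]; rewrite mem_iota /f ltn_mod; lia.
    have Hsz : size (iota 0 q) <= size [seq f j | j <- iota 0 q] by rewrite size_map.
    by have [_ Heq] := uniq_min_size um Hsub Hsz.
  by rewrite -(permP Hp) count_map.
have iin : i \in iota 0 q by rewrite mem_iota; lia.
have := @count_neq (fun j => f j < r) (iota 0 q) i (iota_uniq 0 q) iin.
by rewrite /= fi Hc.
Qed.

Lemma card_ord_count N (P : pred nat) : #|[set w : 'I_N | P w]| = count P (iota 0 N).
Proof.
rewrite cardsE cardE -(val_enum_ord N) count_map /enum_mem size_filter.
by rewrite (@eq_filter _ _ predT) // filter_predT.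
Qed.

Definition EG n s r (u v : nat) : bool := (u != v) && [|| u < s, v < s |
  [&& s <= u, u < n - s, s <= v, v < n - s & Rr (n - 2*s) r (u - s) (v - s)]].
Definition EF n s (u v : nat) : bool := (u != v) && [|| (u < s) && (n - s <= v),
  (v < s) && (n - s <= u) |
  [&& s <= u, u < n - s, s <= v, v < n - s & Rr (n - 2*s) s (u - s) (v - s)]].

Lemma count_split n s P : 2 * s <= n ->
  count P (iota 0 n) = count P (iota 0 s) + count (fun j => P (s + j)) (iota 0 (n - 2 * s))
    + count P (iota (n - s) s).
Proof.
move=> le.
rewrite {1}(_ : n = s + ((n - 2 * s) + s)); last lia.
rewrite iotaD iotaD !count_cat add0n addnA; congr (_ + _ + _).
  by rewrite -{1}(addn0 s) iotaDl count_map.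
by congr (count _ (iota _ _)); lia.
Qed.

Lemma count_all a L (P : pred nat) : (forall v, a <= v < a + L -> P v) -> count P (iota a L) = L.
Proof.
move=> H; rewrite -[RHS](size_iota a L) -count_predT; apply: eq_in_count => v.
by rewrite mem_iota => /H ->.
Qed.

Lemma count_none a L (P : pred nat) : (forall v, a <= v < a + L -> P v = false) -> count P (iota a L) = 0.
Proof.
move=> H; rewrite -[RHS](count_pred0 (iota a L)); apply: eq_in_count => v.
by rewrite mem_iota => /H ->.
Qed.

Lemma count_allbut a L (P : pred nat) u : a <= u < a + L ->
  (forall v, a <= v < a + L -> P v = (u != v)) -> count P (iota a L) = L.-1.
Proof.
move=> hu H.
have uin : u \in iota a L by rewrite mem_iota.
have := @count_neq predT (iota a L) u (iota_uniq a L) uin.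
rewrite count_predT size_iota /= => E.
rewrite -{2}E addn1 /=; apply: eq_in_count => v.
by rewrite mem_iota andbT => /H.
Qed.

Lemma EG_deg n s r u : ~~ odd n -> 0 < s -> 2 * s < n -> r <= n - 2 * s - 1 -> u < n ->
  count (EG n s r u) (iota 0 n) =
  if u < s then n - 1 else if u < n - s then s + r else s.
Proof.
move=> ev s0 sn rle un.
have evm : ~~ odd (n - 2 * s) by rewrite oddB ?ev ?odd_mul ?andFb //; lia.
rewrite (@count_split n s); last lia.
case: ifP => us.
  rewrite (@count_allbut 0 s _ u); [|lia|by move=> v hv; rewrite /EG; case: eqP => //=; lia].
  rewrite count_all; last by move=> j hj; rewrite /EG; apply/andP; split; [apply/eqP|]; lia.
  rewrite count_all; last by move=> v hv; rewrite /EG; apply/andP; split; [apply/eqP|]; lia.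
  lia.
case: ifP => un2.
  rewrite count_all; last by move=> v hv; rewrite /EG; apply/andP; split; [apply/eqP|]; lia.
  rewrite (@count_none (n - s)); last first.
    move=> v hv; rewrite /EG; apply/negbTE/negP => /andP [_]; lia.
  rewrite addn0; congr (_ + _).
  transitivity (count (Rr (n - 2 * s) r (u - s)) (iota 0 (n - 2 * s))); last first.
    by apply: Rr_deg => //; lia.
  apply: eq_in_count => j; rewrite mem_iota add0n => hj.
  rewrite /EG addKn; case E: (Rr _ _ _ _).
    move: (E) => /Rr_neq ne; apply/andP; split; [apply/eqP|]; lia.
  apply/negbTE/negP => /andP [_]; lia.
rewrite count_all; last by move=> v hv; rewrite /EG; apply/andP; split; [apply/eqP|]; lia.
rewrite count_none; last first.
  by move=> j hj; rewrite /EG; apply/negbTE/negP => /andP [_]; lia.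
rewrite count_none; last first.
  by move=> v hv; rewrite /EG; apply/negbTE/negP => /andP [_]; lia.
lia.
Qed.

Lemma EF_deg n s u : ~~ odd n -> 0 < s -> 2 * s < n -> s <= n - 2 * s - 1 -> u < n ->
  count (EF n s u) (iota 0 n) = s.
Proof.
move=> ev s0 sn sle un.
have evm : ~~ odd (n - 2 * s) by rewrite oddB ?ev ?odd_mul ?andFb //; lia.
rewrite (@count_split n s); last lia.
case: (ltnP u s) => us.
  rewrite count_none; last by move=> v hv; rewrite /EF; apply/negbTE/negP => /andP [_]; lia.
  rewrite count_none; last by move=> v hv; rewrite /EF; apply/negbTE/negP => /andP [_]; lia.
  rewrite count_all; last by move=> v hv; rewrite /EF; apply/andP; split; [apply/eqP|]; lia.
  by [].
case: (ltnP u (n - s)) => un2.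
  rewrite count_none; last by move=> v hv; rewrite /EF; apply/negbTE/negP => /andP [_]; lia.
  rewrite (@count_none (n - s)); last first.
    move=> v hv; rewrite /EF; apply/negbTE/negP => /andP [_]; lia.
  rewrite addn0 add0n.
  transitivity (count (Rr (n - 2 * s) s (u - s)) (iota 0 (n - 2 * s))); last first.
    by apply: Rr_deg => //; lia.
  apply: eq_in_count => j; rewrite mem_iota add0n => hj.
  rewrite /EF addKn; case E: (Rr _ _ _ _).
    move: (E) => /Rr_neq ne; apply/andP; split; [apply/eqP|]; lia.
  apply/negbTE/negP => /andP [_]; lia.
rewrite count_all; last by move=> v hv; rewrite /EF; apply/andP; split; [apply/eqP|]; lia.
rewrite count_none; last first.
  by move=> j hj; rewrite /EF; apply/negbTE/negP => /andP [_]; lia.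
rewrite count_none; last first.
  by move=> v hv; rewrite /EF; apply/negbTE/negP => /andP [_]; lia.
lia.
Qed.

Theorem claim2 (n s x : nat) :
  ~~ odd n -> 0 < s -> 2 * s < n -> 2 * s <= x -> x <= n - s - 1 ->
  let d := seq_d n s x in
  let k := s in
  graphic d /\ k_factorable k d /\
  (forall e, realization d e ->
     ~ (exists F, k_factor k e F /\ connected_graph F)).
Proof.
move=> ev s0 sn x2s xle d k.
have hN : size d = n by rewrite /d /seq_d !size_cat !size_nseq; lia.
have nthd : forall i, i < n -> nth 0 d i = if i < s then n.-1 else if i < n - s then x else s.
  move=> i iN; rewrite /d /seq_d !nth_cat !size_nseq !nth_nseq.
  by do ![case: ifP => ?]; lia.
pose e : rel 'I_(size d) := fun u v => EG n s (x - s) u v.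
have real_e : realization d e.
  split; first split.
  - move=> u v; rewrite /e /EG eq_sym Rr_sym; case: (Rr _ _ _ _); lia.
  - by move=> u; rewrite /e /EG eqxx.
  - move=> i; rewrite /deg (card_ord_count _ (EG n s (x - s) i)).
    have iN : (i : nat) < n by rewrite -hN.
    have -> : iota 0 (size d) = iota 0 n by rewrite hN.
    rewrite EG_deg // ?nthd //; last lia.
    by do ![case: ifP => ?]; lia.
split; first by exists e.
split.
  exists e; split => //.
  exists (fun u v : 'I_(size d) => EF n s u v); split; first split.
  - move=> u v; rewrite /EF eq_sym Rr_sym; case: (Rr _ _ _ _); lia.
  - by move=> u; rewrite /EF eqxx.
  split.
  - move=> u v; rewrite /e /EF /EG; case E: (Rr _ s _ _); last lia.
    have -> : Rr (n - 2 * s) (x - s) (u - s) (v - s) by apply: Rr_mono E; lia.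
    lia.
  - move=> v; rewrite /deg (card_ord_count _ (EF n s v)).
    have iN : (v : nat) < n by rewrite -hN.
    have -> : iota 0 (size d) = iota 0 n by rewrite hN.
    rewrite EF_deg //; lia.
move=> G [[Gsym Girr] Gdeg] [F [[[Fsym Firr] [FG Fdeg]] Fcon]].
have cardA : #|[set w : 'I_(size d) | w < s]| = s.
  rewrite (card_ord_count _ (fun w => w < s)) hN count_lt //; lia.
have cardC : #|[set w : 'I_(size d) | n - s <= w]| = s.
  rewrite (card_ord_count _ (fun w => n - s <= w)) hN (@count_split n s); last lia.
  rewrite count_none; last by move=> v hv; lia.
  rewrite count_none; last by move=> v hv; lia.
  rewrite count_all //; move=> v hv; lia.
have valN : forall w : 'I_(size d), (w : nat) < n by move=> w; rewrite -hN.
have step1 : forall a w : 'I_(size d), a < s -> w != a -> G a w.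
  move=> a w aS wa.
  have sub : [set w | G a w] \subset [set~ a].
    apply/subsetP => y; rewrite !inE; apply: contraTN => /eqP ->; by rewrite Girr.
  have ca : #|[set w | G a w]| = n.-1 by rewrite -[LHS]/(deg G a) Gdeg nthd ?aS.
  have : [set w | G a w] == [set~ a].
    by rewrite eqEcard sub cardsC1 card_ord ca /=; lia.
  by move/eqP/setP => /(_ w); rewrite !inE wa.
have step2 : forall c w : 'I_(size d), n - s <= c -> G c w -> w < s.
  move=> c w cC Gcw.
  have sub : [set w : 'I_(size d) | w < s] \subset [set w | G c w].
    apply/subsetP => y; rewrite !inE => yS; rewrite Gsym; apply: step1 => //.
    by apply/eqP => E; move: yS cC; rewrite E; lia.
  have cc : #|[set w | G c w]| = s.
    rewrite -[LHS]/(deg G c) Gdeg nthd //; do ![case: ifP => ?]; lia.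
  have : [set w : 'I_(size d) | w < s] == [set w | G c w].
    by rewrite eqEcard sub cc cardA /=.
  by move/eqP/setP => /(_ w); rewrite !inE Gcw.
have step3 : forall c a : 'I_(size d), n - s <= c -> a < s -> F c a.
  move=> c a cC aS.
  have sub : [set w | F c w] \subset [set w : 'I_(size d) | w < s].
    by apply/subsetP => y; rewrite !inE => /FG; apply: step2.
  have : [set w | F c w] == [set w : 'I_(size d) | w < s].
    by rewrite eqEcard sub cardA -[#|_|]/(deg F c) Fdeg /=.
  by move/eqP/setP => /(_ a); rewrite !inE aS.
have step4 : forall a w : 'I_(size d), a < s -> F a w -> n - s <= w.
  move=> a w aS Faw.
  have sub : [set w : 'I_(size d) | n - s <= w] \subset [set w | F a w].
    by apply/subsetP => y; rewrite !inE => yC; rewrite Fsym; apply: step3.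
  have : [set w : 'I_(size d) | n - s <= w] == [set w | F a w].
    by rewrite eqEcard sub cardC -[#|[set w | F a w]|]/(deg F a) Fdeg /=.
  by move/eqP/setP => /(_ w); rewrite !inE Faw.
pose S := [pred w : 'I_(size d) | (w < s) || (n - s <= w)].
have imp : forall u w, F u w -> S u -> S w.
  move=> u w Fuw; rewrite /S /= => /orP [uS|uC]; apply/orP.
    by right; apply: step4 Fuw.
  by left; apply: (step2 u) => //; apply: FG.
have cl : closed F S.
  move=> u w Fuw; apply/idP/idP; first exact: imp.
  by apply: imp; rewrite Fsym.
have N0 : 0 < size d by rewrite hN; lia.
have Ns : s < size d by rewrite hN; lia.
have := closed_connect cl (Fcon (Ordinal N0) (Ordinal Ns)).
rewrite /S !inE /=; lia.
Qed.
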